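(* Let $G$ be a connected affine algebraic group acting on an affine variety $X$, and let $X=\bigcup_{i=1}^n X_i$ be the decomposition of $X$ into irreducible components. Then the action $G\times X\to X$ is observable if and only if each restricted action $G\times X_i\to X_i$ ($i=1,\dots,n$) is observable.
   Context: $\Bbbk$ is algebraically closed; varieties are reduced. Since $G$ is connected, each irreducible component $X_i$ is $G$-stable. An action of $G$ on an affine variety $Y$ is called observable if for every nonzero $G$-stable ideal $I\subset\Bbbk[Y]$ one has $I^G\neq(0)$, where $I^G$ denotes the $G$-invariant elements of $I$ under $(g\cdot f)(y)=f(g^{-1}y)$. *)

(* Defs.v *)
From mathcomp Require Import all_boot all_algebra.
From mathcomp Require Import mpoly.
Set Implicit Arguments. Unset Strict Implicit. Unset Printing Implicit Defensive.
Import GRing.Theory.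
Local Open Scope ring_scope.

(* Points of affine n-space k^n are functions 'I_n -> k; subsets are predicates. *)

Definition pjoin (k : Type) (N m : nat) (g : 'I_N -> k) (x : 'I_m -> k)
  : 'I_(N + m) -> k :=
  fun i => match split i with inl a => g a | inr b => x b end.

Definition zariski_closed (k : fieldType) (m : nat) (Z : ('I_m -> k) -> Prop) : Prop :=
  exists S : {mpoly k[m]} -> Prop,
    forall x, Z x <-> (forall p, S p -> p.@[x] = 0).

Definition regular_map1 (k : fieldType) (N r : nat) (D : ('I_N -> k) -> Prop)
  (f : ('I_N -> k) -> ('I_r -> k)) : Prop :=
  exists P : 'I_r -> {mpoly k[N]}, forall g, D g -> forall j, f g j = (P j).@[g].

Definition regular_map2 (k : fieldType) (N m r : nat)
  (D : ('I_N -> k) -> ('I_m -> k) -> Prop)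
  (f : ('I_N -> k) -> ('I_m -> k) -> ('I_r -> k)) : Prop :=
  exists P : 'I_r -> {mpoly k[N + m]},
    forall g x, D g x -> forall j, f g x j = (P j).@[pjoin g x].

Definition is_affine_group (k : fieldType) (N : nat) (G : ('I_N -> k) -> Prop)
  (mul : ('I_N -> k) -> ('I_N -> k) -> ('I_N -> k))
  (inv : ('I_N -> k) -> ('I_N -> k)) (e : 'I_N -> k) : Prop :=
  zariski_closed G /\ G e
  /\ (forall g h, G g -> G h -> G (mul g h))
  /\ (forall g, G g -> G (inv g))
  /\ (forall g h l, G g -> G h -> G l -> mul g (mul h l) = mul (mul g h) l)
  /\ (forall g, G g -> mul e g = g /\ mul g e = g)
  /\ (forall g, G g -> mul (inv g) g = e /\ mul g (inv g) = e)
  /\ regular_map2 (fun g h => G g /\ G h) mul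
  /\ regular_map1 G inv.

Definition zariski_connected (k : fieldType) (N : nat) (G : ('I_N -> k) -> Prop) : Prop :=
  forall A B : ('I_N -> k) -> Prop, zariski_closed A -> zariski_closed B ->
    (forall g, G g -> A g \/ B g) -> (forall g, G g -> A g -> B g -> False) ->
    (forall g, G g -> A g) \/ (forall g, G g -> B g).

Definition is_regular_action (k : fieldType) (N m : nat) (G : ('I_N -> k) -> Prop)
  (mul : ('I_N -> k) -> ('I_N -> k) -> ('I_N -> k)) (e : 'I_N -> k)
  (X : ('I_m -> k) -> Prop) (act : ('I_N -> k) -> ('I_m -> k) -> ('I_m -> k)) : Prop :=
  (forall g x, G g -> X x -> X (act g x))
  /\ (forall x, X x -> act e x = x)
  /\ (forall g h x, G g -> G h -> X x -> act (mul g h) x = act g (act h x))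
  /\ regular_map2 (fun g x => G g /\ X x) act.

Definition zariski_irreducible (k : fieldType) (m : nat) (Y : ('I_m -> k) -> Prop) : Prop :=
  (exists y, Y y) /\
  forall A B : ('I_m -> k) -> Prop, zariski_closed A -> zariski_closed B ->
    (forall y, Y y -> A y \/ B y) -> (forall y, Y y -> A y) \/ (forall y, Y y -> B y).

Definition irreducible_component (k : fieldType) (m : nat) (X Y : ('I_m -> k) -> Prop) : Prop :=
  zariski_closed Y /\ (forall y, Y y -> X y) /\ zariski_irreducible Y /\
  (forall Z, zariski_closed Z -> zariski_irreducible Z ->
     (forall y, Y y -> Z y) -> (forall y, Z y -> X y) -> forall y, Z y -> Y y).

(* Ideals of k[Y] = k[x_1..x_m]/I(Y) are represented by ideals of
   k[x_1..x_m] containing the vanishing ideal I(Y). *)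
Definition coord_ideal (k : fieldType) (m : nat) (Y : ('I_m -> k) -> Prop)
  (I : {mpoly k[m]} -> Prop) : Prop :=
  (forall p, (forall y, Y y -> p.@[y] = 0) -> I p)
  /\ (forall p q, I p -> I q -> I (p + q))
  /\ (forall p q, I p -> I (q * p)).

(* nonzero in k[Y]: contains a function not vanishing identically on Y *)
Definition coord_ideal_nonzero (k : fieldType) (m : nat) (Y : ('I_m -> k) -> Prop)
  (I : {mpoly k[m]} -> Prop) : Prop :=
  exists p, I p /\ exists y, Y y /\ p.@[y] != 0.

(* G-stable for (g . f)(y) = f(g^-1 y) *)
Definition G_stable_ideal (k : fieldType) (N m : nat) (G : ('I_N -> k) -> Prop)
  (inv : ('I_N -> k) -> ('I_N -> k))
  (act : ('I_N -> k) -> ('I_m -> k) -> ('I_m -> k))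
  (Y : ('I_m -> k) -> Prop) (I : {mpoly k[m]} -> Prop) : Prop :=
  forall p g, I p -> G g ->
    exists q, I q /\ forall y, Y y -> q.@[y] = p.@[act (inv g) y].

Definition observable (k : fieldType) (N m : nat) (G : ('I_N -> k) -> Prop)
  (inv : ('I_N -> k) -> ('I_N -> k))
  (act : ('I_N -> k) -> ('I_m -> k) -> ('I_m -> k))
  (Y : ('I_m -> k) -> Prop) : Prop :=
  forall I : {mpoly k[m]} -> Prop,
    coord_ideal Y I -> G_stable_ideal G inv act Y I -> coord_ideal_nonzero Y I ->
    exists p, I p /\ (exists y, Y y /\ p.@[y] != 0) /\
      (forall g y, G g -> Y y -> p.@[act (inv g) y] = p.@[y]).

(* Main.v *)
Require Import Defs.
From mathcomp Require Import all_boot all_algebra.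
From mathcomp Require Import mpoly.
From Stdlib Require Import Classical FunctionalExtensionality PropExtensionality.
Set Implicit Arguments. Unset Strict Implicit. Unset Printing Implicit Defensive.
Import GRing.Theory.
Local Open Scope ring_scope.

Section Helpers.
Variable k : fieldType.

Lemma polymap m r (Q : 'I_r -> {mpoly k[m]}) (p : {mpoly k[r]}) :
  exists c : {mpoly k[m]}, forall x, c.@[x] = p.@[fun j => (Q j).@[x]].
Proof.
exists (p \mPo [tuple Q i | i < r]) => x; rewrite comp_mpoly_meval.
by apply: meval_eq => i; rewrite tnth_mktuple.
Qed.

Lemma reg2_g N m r (D : ('I_N -> k) -> ('I_m -> k) -> Prop) f :
  regular_map2 D f -> forall g (p : {mpoly k[r]}), exists c : {mpoly k[m]},
  forall x, D g x -> c.@[x] = p.@[f g x].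
Proof.
case=> P HP g p.
pose R := fun i : 'I_(N + m) => match split i with inl a => (g a)%:MP | inr b => 'X_b end.
have [c Hc] := polymap (fun j => (P j) \mPo [tuple R i | i < N + m]) p.
exists c => x Dx; rewrite Hc; apply: meval_eq => j.
rewrite HP // comp_mpoly_meval; apply: meval_eq => i; rewrite tnth_mktuple /R /pjoin.
by case: (split i) => [a|b]; rewrite ?mevalC ?mevalXU.
Qed.

Lemma reg2_x N m r (D : ('I_N -> k) -> ('I_m -> k) -> Prop) f :
  regular_map2 D f -> forall x (p : {mpoly k[r]}), exists c : {mpoly k[N]},
  forall g, D g x -> c.@[g] = p.@[f g x].
Proof.
case=> P HP x p.
pose R := fun i : 'I_(N + m) => match split i with inl a => 'X_a | inr b => (x b)%:MP end.
have [c Hc] := polymap (fun j => (P j) \mPo [tuple R i | i < N + m]) p.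
exists c => g Dg; rewrite Hc; apply: meval_eq => j.
rewrite HP // comp_mpoly_meval; apply: meval_eq => i; rewrite tnth_mktuple /R /pjoin.
by case: (split i) => [a|b]; rewrite ?mevalC ?mevalXU.
Qed.

Lemma closed_ext m (A B : ('I_m -> k) -> Prop) :
  (forall x, A x <-> B x) -> zariski_closed A -> zariski_closed B.
Proof. move=> H [S HS]; exists S => x; rewrite -H; exact: HS. Qed.

Lemma closed_pre m r (D : ('I_m -> k) -> Prop) (A : ('I_r -> k) -> Prop) F :
  zariski_closed D -> zariski_closed A ->
  (forall p : {mpoly k[r]}, exists c : {mpoly k[m]}, forall x, D x -> c.@[x] = p.@[F x]) ->
  zariski_closed (fun x => D x /\ A (F x)).
Proof.
move=> [SD HD] [SA HA] Hc.
exists (fun c => SD c \/ exists p, SA p /\ forall x, D x -> c.@[x] = p.@[F x]) => x; split.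
  move=> [Dx Ax] c [Sc|[p [Sp Hp]]]; first exact: ((HD x).1 Dx c Sc).
  by rewrite Hp //; exact: ((HA _).1 Ax p Sp).
move=> H.
have Dx : D x by apply/HD => p Sp; apply: H; left.
split=> //; apply/HA => p Sp; have [c Hcc] := Hc p.
rewrite -Hcc //; apply: H; right; by exists p.
Qed.

Lemma closed_inter m T (Z : T -> ('I_m -> k) -> Prop) :
  (forall t, zariski_closed (Z t)) -> zariski_closed (fun x => forall t, Z t x).
Proof.
move=> HZ.
exists (fun p => exists t (St : {mpoly k[m]} -> Prop),
  (forall x, Z t x <-> (forall p, St p -> p.@[x] = 0)) /\ St p) => x; split.
  move=> H p [t [St [HSt Sp]]]; by move/HSt: (H t); apply.
move=> H t; have [St HSt] := HZ t; apply/HSt => p Sp; apply: H.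
by exists t, St.
Qed.

Lemma closed_empty m : zariski_closed (fun _ : 'I_m -> k => False).
Proof.
exists (fun p => p = 1) => x; split=> // H.
by move: (H 1 erefl); rewrite meval1 => /eqP; rewrite oner_eq0.
Qed.

Lemma closed_full m : zariski_closed (fun _ : 'I_m -> k => True).
Proof. by exists (fun _ => False) => x; split. Qed.

Lemma closed_union2 m (A B : ('I_m -> k) -> Prop) :
  zariski_closed A -> zariski_closed B -> zariski_closed (fun x => A x \/ B x).
Proof.
move=> [SA HA] [SB HB].
exists (fun r => exists p q, SA p /\ SB q /\ r = p * q) => x; split.
  move=> [Ax|Bx] r [p [q [Sp [Sq ->]]]]; rewrite mevalM.
    by rewrite ((HA x).1 Ax p Sp) mul0r.
  by rewrite ((HB x).1 Bx q Sq) mulr0.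
move=> H; case: (classic (A x)) => [|nA]; first by left.
right; apply/HB => q Sq.
have [p [Sp px]] : exists p, SA p /\ p.@[x] != 0.
  apply: NNPP => N; apply: nA; apply/HA => p Sp.
  apply: NNPP => np; apply: N; exists p; split=> //; exact/eqP.
have := H (p * q); rewrite mevalM => /(_ (ex_intro _ p (ex_intro _ q (conj Sp (conj Sq erefl))))).
by move/eqP; rewrite mulf_eq0 (negbTE px) => /eqP.
Qed.

Lemma closed_seq m n (Xc : 'I_n -> ('I_m -> k) -> Prop) (s : seq 'I_n) :
  (forall j, zariski_closed (Xc j)) ->
  zariski_closed (fun y => exists j, j \in s /\ Xc j y).
Proof.
move=> HC; elim: s => [|a s IH].
  by apply: closed_ext (closed_empty m) => x; split=> // [[j []]].
apply: closed_ext (closed_union2 (HC a) IH) => x; split.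
  move=> [Ha|[j [js Hj]]]; first by exists a; rewrite inE eqxx.
  by exists j; rewrite inE js orbT.
move=> [j []]; rewrite inE => /orP [/eqP ->|js] Hj; first by left.
by right; exists j.
Qed.

Lemma irr_seq m n (Xc : 'I_n -> ('I_m -> k) -> Prop) (s : seq 'I_n) Y :
  (forall j, zariski_closed (Xc j)) -> zariski_irreducible Y ->
  (forall y, Y y -> exists j, j \in s /\ Xc j y) ->
  exists j, j \in s /\ forall y, Y y -> Xc j y.
Proof.
move=> HC [[y0 Y0] HY]; elim: s => [|a s IH] Hs.
  by have [j []] := Hs y0 Y0.
have cov : forall y, Y y -> Xc a y \/ (exists j, j \in s /\ Xc j y).
  move=> y Yy; have [j []] := Hs y Yy; rewrite inE => /orP [/eqP ->|js] Hj.
    by left.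
  by right; exists j.
have [Ha|Hr] := HY _ _ (HC a) (closed_seq s HC) cov.
- by exists a; rewrite inE eqxx.
- have [j [js Hj]] := IH Hr; exists j; by rewrite inE js orbT.
Qed.

End Helpers.

Unset Implicit Arguments.

Theorem lemma3p1 (k : closedFieldType) (N m n : nat)
  (G : ('I_N -> k) -> Prop)
  (mul : ('I_N -> k) -> ('I_N -> k) -> ('I_N -> k))
  (inv : ('I_N -> k) -> ('I_N -> k)) (e : 'I_N -> k)
  (X : ('I_m -> k) -> Prop)
  (act : ('I_N -> k) -> ('I_m -> k) -> ('I_m -> k))
  (Xc : 'I_n -> ('I_m -> k) -> Prop) :
  is_affine_group G mul inv e ->
  zariski_connected G ->
  zariski_closed X ->
  is_regular_action G mul e X act ->
  (forall i, irreducible_component X (Xc i)) ->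
  (forall i j, Xc i = Xc j -> i = j) ->
  (forall x, X x <-> exists i, Xc i x) ->
  (observable G inv act X <-> forall i, observable G inv act (Xc i)).
Proof.
move=> [clG [Ge [Gmul [Ginv [Gassoc [Gunit [Ginvax [regmul reginv]]]]]]]] conG clX
  [actX [acte [actmul regact]]] comp inj cover.
have XcX : forall i y, Xc i y -> X y.
  by move=> i y H; case: (comp i) => [_ [H2 _]]; exact: H2.
have clXc : forall i, zariski_closed (Xc i) by move=> i; case: (comp i).
have irrXc : forall i, zariski_irreducible (Xc i) by move=> i; case: (comp i) => _ [_ []].
have maxXc : forall i Z, zariski_closed Z -> zariski_irreducible Z ->
    (forall y, Xc i y -> Z y) -> (forall y, Z y -> X y) -> forall y, Z y -> Xc i y.
  by move=> i; case: (comp i) => _ [_ [_ H]].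
have preg : forall g (p : {mpoly k[m]}), G g ->
    exists c : {mpoly k[m]}, forall x, X x -> c.@[x] = p.@[act g x].
  move=> g p Gg; have [c Hc] := reg2_g regact g p; exists c => x Xx; exact: Hc.
have prex : forall x (p : {mpoly k[m]}), X x ->
    exists c : {mpoly k[N]}, forall g, G g -> c.@[g] = p.@[act g x].
  move=> x p Xx; have [c Hc] := reg2_x regact x p; exists c => g Gg; exact: Hc.
have invK1 : forall g x, G g -> X x -> act (inv g) (act g x) = x.
  move=> g x Gg Xx; rewrite -actmul //; last exact: Ginv.
  have [-> _] := Ginvax g Gg; exact: acte.
have invK2 : forall g x, G g -> X x -> act g (act (inv g) x) = x.
  move=> g x Gg Xx; rewrite -actmul //; last exact: Ginv.
  have [_ ->] := Ginvax g Gg; exact: acte.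
have sub_eq : forall i j, (forall y, Xc i y -> Xc j y) -> i = j.
  move=> i j H; apply: inj; apply: functional_extensionality => y.
  apply: propositional_extensionality; split; first exact: H.
  exact: (maxXc i (Xc j) (clXc j) (irrXc j) H (XcX j)).
pose U i := fun y => exists j, j != i /\ Xc j y.
have clU : forall i, zariski_closed (U i).
  move=> i; apply: closed_ext (closed_seq [seq j <- enum 'I_n | j != i] clXc) => y; split.
    by move=> [j []]; rewrite mem_filter => /andP [ji _] H; exists j.
  by move=> [j [ji H]]; exists j; rewrite mem_filter ji mem_enum.
have notU : forall i, ~ (forall y, Xc i y -> U i y).
  move=> i H.
  have cv : forall y, Xc i y -> exists j, j \in [seq j <- enum 'I_n | j != i] /\ Xc j y.
    move=> y /H [j [ji Hj]]; exists j; by rewrite mem_filter ji mem_enum.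
  have [j [jin Hj]] := irr_seq clXc (irrXc i) cv.
  move: jin; rewrite mem_filter => /andP [ji _].
  by move: ji; rewrite (sub_eq _ _ Hj) eqxx.
have comp_eq : forall Y, irreducible_component X Y -> exists l, forall y, Y y <-> Xc l y.
  move=> Y [clY [YX [irrY maxY]]].
  have [l [_ Hl]] : exists l, l \in enum 'I_n /\ forall y, Y y -> Xc l y.
    apply: irr_seq clXc irrY _ => y /YX /cover [j Hj]; exists j; by rewrite mem_enum.
  exists l => y; split; first exact: Hl.
  exact: (maxY (Xc l) (clXc l) (irrXc l) Hl (XcX l)).
have hex : forall i, exists h : {mpoly k[m]},
    (forall y, U i y -> h.@[y] = 0) /\ exists y, Xc i y /\ h.@[y] != 0.
  move=> i; have [S HS] := clU i.
  have [y [Xy nUy]] : exists y, Xc i y /\ ~ U i y.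
    apply: NNPP => H; apply: (notU i) => y Xy; apply: NNPP => nU; apply: H; by exists y.
  have [p [Sp py]] : exists p, S p /\ p.@[y] != 0.
    apply: NNPP => H; apply: nUy; apply/HS => p Sp; apply: NNPP => np; apply: H.
    exists p; split=> //; exact/eqP.
  exists p; split; last by exists y.
  by move=> z Uz; exact: ((HS z).1 Uz p Sp).
have htrick : forall i (p h : {mpoly k[m]}), (exists y, Xc i y /\ p.@[y] != 0) ->
    (exists y, Xc i y /\ h.@[y] != 0) -> exists y, Xc i y /\ (p * h).@[y] != 0.
  move=> i p h [y1 [X1 p1]] [y2 [X2 h2]].
  have zc : forall q : {mpoly k[m]}, zariski_closed (fun y => q.@[y] = 0).
    move=> q; exists (fun r => r = q) => y; split; [by move=> H r -> | by move=> H; apply: H].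
  apply: NNPP => H.
  have cov : forall y, Xc i y -> p.@[y] = 0 \/ h.@[y] = 0.
    move=> y Xy; apply: NNPP => H2; apply: H; exists y; split=> //.
    rewrite mevalM; apply: mulf_neq0; apply/eqP => E; apply: H2; by [left|right].
  case: ((irrXc i).2 _ _ (zc p) (zc h) cov) => [/(_ y1 X1)|/(_ y2 X2)] E.
    by move: p1; rewrite E eqxx.
  by move: h2; rewrite E eqxx.
have stable : forall i g x, G g -> Xc i x -> Xc i (act g x).
  move=> i.
  pose pre := fun h (Z : ('I_m -> k) -> Prop) x => X x /\ Z (act h x).
  have pre_cl : forall h Z, G h -> zariski_closed Z -> zariski_closed (pre h Z).
    move=> h Z Gh cZ; apply: closed_pre clX cZ _ => p; exact: preg.
  have pre_irr : forall h Z, G h -> zariski_irreducible Z -> (forall y, Z y -> X y) ->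
      zariski_irreducible (pre h Z).
    move=> h Z Gh [[z0 Z0] irrZ] ZX; have Gh' := Ginv h Gh; split.
      exists (act (inv h) z0); split; first by apply: actX => //; exact: ZX.
      by rewrite invK2 //; exact: ZX.
    move=> A B cA cB cov.
    have cov' : forall z, Z z -> pre (inv h) A z \/ pre (inv h) B z.
      move=> z Zz; have Xz := ZX z Zz.
      have: pre h Z (act (inv h) z) by split; [exact: actX | rewrite invK2].
      by move/cov => [Ha|Hb]; [left|right].
    have [HA|HB] := irrZ _ _ (pre_cl _ _ Gh' cA) (pre_cl _ _ Gh' cB) cov'.
      by left => x [Xx Zx]; have [_ H] := HA _ Zx; rewrite invK1 in H.
    by right => x [Xx Zx]; have [_ H] := HB _ Zx; rewrite invK1 in H.
  have img : forall g, G g -> irreducible_component X (pre (inv g) (Xc i)).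
    move=> g Gg; have Gg' := Ginv g Gg.
    split; first exact: pre_cl.
    split; first by move=> y [].
    split; first exact: pre_irr (irrXc i) (XcX i).
    move=> Z cZ iZ sub ZX.
    have W := pre_cl g Z Gg cZ.
    have iW := pre_irr g Z Gg iZ ZX.
    have XiW : forall x, Xc i x -> pre g Z x.
      move=> x Xx; have XX := XcX i x Xx; split=> //; apply: sub; split; first exact: actX.
      by rewrite invK1.
    have WXi := maxXc i _ W iW XiW (fun y (H : pre g Z y) => H.1).
    move=> z Zz; have Xz := ZX z Zz; split=> //; apply: WXi; split; first exact: actX.
    by rewrite invK2.
  pose C := fun g => forall x, G g /\ (Xc i x -> Xc i (act g x)).
  pose D := fun g => forall x, G g /\ (Xc i x -> U i (act g x)).
  have clC : zariski_closed C.
    apply: closed_inter => x; case: (classic (Xc i x)) => Hx.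
      apply: closed_ext (closed_pre (F := fun g => act g x) clG (clXc i)
        (fun p => prex x p (XcX i x Hx))) => g.
      split=> [[Gg H]|[Gg H]]; split=> //; by [move=> _ | apply: H].
    by apply: closed_ext clG => g; split=> [Gg|[]//]; split.
  have clD : zariski_closed D.
    apply: closed_inter => x; case: (classic (Xc i x)) => Hx.
      apply: closed_ext (closed_pre (F := fun g => act g x) clG (clU i)
        (fun p => prex x p (XcX i x Hx))) => g.
      split=> [[Gg H]|[Gg H]]; split=> //; by [move=> _ | apply: H].
    by apply: closed_ext clG => g; split=> [Gg|[]//]; split.
  have cov : forall g, G g -> C g \/ D g.
    move=> g Gg; have [l Hl] := comp_eq _ (img g Gg).
    have into : forall x, Xc i x -> Xc l (act g x).
      move=> x Xx; apply/(Hl _).1; split; first exact: actX (XcX i x Xx).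
      by rewrite invK1 //; exact: XcX i x Xx.
    case: (eqVneq l i) => [Eli|nli].
      by left => x; split=> // Xx; rewrite -Eli; exact: into.
    by right => x; split=> // Xx; exists l; split=> //; exact: into.
  have back : forall g l, G g -> (forall y, pre (inv g) (Xc i) y <-> Xc l y) ->
      forall y, Xc l y -> Xc i (act (inv g) y) /\ y = act g (act (inv g) y).
    by move=> g l Gg Hl y /Hl [Xy H]; split=> //; rewrite invK2.
  have disj : forall g, G g -> C g -> D g -> False.
    move=> g Gg HC HD; have [l Hl] := comp_eq _ (img g Gg).
    have Eli : l = i.
      apply: sub_eq => y Xly; have [H1 ->] := back g l Gg Hl y Xly; exact: (HC _).2.
    subst l.
    apply: (notU i) => y Xiy; have [H1 ->] := back g i Gg Hl y Xiy; exact: (HD _).2.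
  have [allC|allD] := conG C D clC clD cov disj.
    move=> g x Gg Xx; exact: ((allC g Gg) x).2 Xx.
  exfalso; apply: (notU i) => y Xy; have := ((allD e Ge) y).2 Xy.
  by rewrite acte //; exact: XcX i y Xy.
split.
- move=> obsX i I [I0 [Iadd Imul]] Istab [p0 [Ip0 [y0 [Xy0 py0]]]].
  pose J := fun p : {mpoly k[m]} => I p /\ forall y, U i y -> p.@[y] = 0.
  have J0 : coord_ideal X J.
    split; [|split].
    - move=> p Hp; split; first by apply: I0 => y Xy; apply: Hp; exact: XcX i y Xy.
      move=> y [j [_ Hj]]; exact: Hp (XcX j y Hj).
    - move=> p q [Ip Up] [Iq Uq]; split; first exact: Iadd.
      by move=> y Uy; rewrite mevalD Up // Uq // addr0.
    - move=> p q [Ip Up]; split; first exact: Imul.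
      by move=> y Uy; rewrite mevalM Up // mulr0.
  have Jst : G_stable_ideal G inv act X J.
    move=> p g [Ip Up] Gg; have Gg' := Ginv g Gg.
    have [c Hc] := preg (inv g) p Gg'.
    exists c; split=> //; split.
      have [q [Iq Hq]] := Istab p g Ip Gg.
      have : I (c - q + q).
        apply: Iadd => //; apply: I0 => y Xy; rewrite mevalB Hc; last exact: XcX i y Xy.
        by rewrite Hq // subrr.
      by rewrite subrK.
    move=> y [j [ji Hj]]; rewrite Hc; last exact: XcX j y Hj.
    apply: Up; exists j; split=> //; exact: stable.
  have [h [Uh [y1 [Xy1 hy1]]]] := hex i.
  have [y [Xy py]] := htrick i p0 h (ex_intro _ y0 (conj Xy0 py0))
    (ex_intro _ y1 (conj Xy1 hy1)).
  have Jph : J (p0 * h).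
    split; first by rewrite mulrC; exact: Imul.
    by move=> z Uz; rewrite mevalM Uh // mulr0.
  have [p [[Ip Up] [[z [Xz pz]] inv_p]]] := obsX J J0 Jst
    (ex_intro _ (p0*h) (conj Jph (ex_intro _ y (conj (XcX i y Xy) py)))).
  exists p; split=> //; split.
    have [j Hj] := (cover z).1 Xz.
    case: (eqVneq j i) => [Eji|nji]; first by exists z; rewrite -Eji.
    exfalso; move: pz; rewrite (Up z) ?eqxx //; by exists j; split.
  move=> g y2 Gg Xy2; exact: inv_p Gg (XcX i y2 Xy2).
- move=> obsi I [I0 [Iadd Imul]] Istab [p0 [Ip0 [x0 [Xx0 px0]]]].
  have [i Xix0] := (cover x0).1 Xx0.
  pose J := fun r : {mpoly k[m]} => exists q, I q /\
    (forall y, U i y -> q.@[y] = 0) /\ forall y, Xc i y -> r.@[y] = q.@[y].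
  have I0' : I 0 by apply: I0 => y _; rewrite meval0.
  have J0 : coord_ideal (Xc i) J.
    split; [|split].
    - move=> r Hr; exists 0; split=> //.
      split; [by move=> y _; rewrite meval0 | by move=> y Xy; rewrite meval0; exact: Hr].
    - move=> r s [q1 [I1 [U1 E1]]] [q2 [I2 [U2 E2]]]; exists (q1 + q2).
      split; first exact: Iadd.
      split=> y Hy; rewrite !mevalD; [by rewrite U1 // U2 // addr0 | by rewrite E1 // E2].
    - move=> r s [q [Iq [Uq Eq]]]; exists (s * q); split; first exact: Imul.
      split=> y Hy; rewrite !mevalM; [by rewrite Uq // mulr0 | by rewrite Eq].
  have Jst : G_stable_ideal G inv act (Xc i) J.
    move=> r g [q [Iq [Uq Eq]]] Gg; have Gg' := Ginv g Gg.
    have [q1 [Iq1 Hq1]] := Istab q g Iq Gg.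
    exists q1; split.
      exists q1; split=> //; split=> // y [j [ji Hj]].
      rewrite Hq1; last exact: XcX j y Hj.
      apply: Uq; exists j; split=> //; exact: stable.
    move=> y Xy; rewrite Hq1; last exact: XcX i y Xy.
    by rewrite Eq //; exact: stable.
  have [h [Uh hnz]] := hex i.
  have [y [Xy py]] := htrick i p0 h (ex_intro _ x0 (conj Xix0 px0)) hnz.
  have Jph : J (p0 * h).
    exists (p0 * h); split; first by rewrite mulrC; exact: Imul.
    split=> // z Uz; by rewrite mevalM Uh // mulr0.
  have [r [[q [Iq [Uq Eq]]] [[z [Xz rz]] inv_r]]] := obsi i J J0 Jst
    (ex_intro _ (p0*h) (conj Jph (ex_intro _ y (conj Xy py)))).
  exists q; split=> //; split.
    by exists z; split; [exact: XcX i z Xz | rewrite -Eq].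
  move=> g y2 Gg Xy2; have Gg' := Ginv g Gg.
  case: (classic (Xc i y2)) => Hy2.
    rewrite -(Eq y2 Hy2) -Eq; [exact: inv_r Gg Hy2 | exact: stable].
  have [j Hj] := (cover y2).1 Xy2.
  have ji : j != i by apply/eqP => E; apply: Hy2; rewrite -E.
  rewrite (Uq y2); last by exists j.
  apply: Uq; exists j; split=> //; exact: stable.
Qed.
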